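(* Let $W$ be a finite real reflection group acting effectively on $\mathbf{R}^n$, with root system consisting of unit vectors, and let $\mathcal{A}$ be its (central, essential) arrangement of reflecting hyperplanes with intersection lattice $L_{\mathcal{A}}$. Let $\tau_1,\dots,\tau_n$ be any linearly independent roots. Let $$\lambda=\min\{|\mathbf{r}\cdot\rho| : \mathbf{r}\text{ a unit ray},\ \rho\text{ a root},\ \mathbf{r}\cdot\rho\neq 0\},$$ $a=1+1/\lambda$, and $\mathbf{v}=\tau_1+a\tau_2+a^2\tau_3+\dots+a^{n-1}\tau_n$. Then $|\mathbf{r}\cdot\mathbf{v}|\ge\lambda$ for every unit length ray $\mathbf{r}$. In particular, the affine hyperplane $H_{\mathbf{v}}$ is generic with respect to $\mathcal{A}$.
   Context: The roots of $W$ are the unit vectors $\pm\rho$ normal to reflecting hyperplanes of $W$ (in particular they are images under $W$ of the inward unit normals of a fundamental chamber). $L_{\mathcal{A}}$ is the set of intersections of subfamilies of $\mathcal{A}$, ordered by reverse inclusion. A ray is a nonzero vector lying in a one-dimensional subspace belonging to $L_{\mathcal{A}}$; a unit ray is a ray of length $1$ (there are finitely many, so $\lambda$ is a well-defined positive real number). For a nonzero vector $\mathbf{v}$, $H_{\mathbf{v}}$ is the affine hyperplane through $\mathbf{v}$ and normal to $\mathbf{v}$, i.e. $\{\mathbf{x}:\mathbf{x}\cdot\mathbf{v}=\mathbf{v}\cdot\mathbf{v}\}$. $H_{\mathbf{v}}$ is generic with respect to $\mathcal{A}$ if $\dim(H_{\mathbf{v}}\cap X)=\dim(X)-1$ for all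 $X\in L_{\mathcal{A}}$. *)

(* Defs.v *)
From HB Require Import structures.
From mathcomp Require Import all_boot all_order all_algebra.
From mathcomp Require Import reals.
Set Implicit Arguments. Unset Strict Implicit. Unset Printing Implicit Defensive.
Import Order.TTheory GRing.Theory Num.Theory.
Local Open Scope ring_scope.

Section Defs.
Variables (R : realType) (n : nat).

Definition dot (x y : 'rV[R]_n) : R := \sum_(i < n) x 0 i * y 0 i.

(* Orthogonal reflection in the hyperplane normal to the unit vector rho,
   acting on row vectors: x *m refl rho = x - 2 (x.rho) rho. *)
Definition refl (rho : 'rV[R]_n) : 'M[R]_n := 1%:M - 2%:R *: (rho^T *m rho).

(* W : a finite group of n x n real matrices (given by the finite list of its
   elements) generated by reflections. *)
Definition finite_reflection_group (W : seq 'M[R]_n) : Prop :=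
  [/\ 1%:M \in W,
      (forall g h, g \in W -> h \in W -> g *m h \in W) &
      (forall g, g \in W -> exists s : seq 'rV[R]_n,
          (forall rho, rho \in s -> dot rho rho = 1 /\ refl rho \in W) /\
          g = foldr (@mulmx R n n n) 1%:M [seq refl rho | rho <- s])].

Definition is_root (W : seq 'M[R]_n) (rho : 'rV[R]_n) : Prop :=
  dot rho rho = 1 /\ refl rho \in W.

(* Element of L_A: intersection of the reflecting hyperplanes indexed by a
   subfamily P of roots (as a set of vectors). *)
Definition flat (P : 'rV[R]_n -> Prop) (x : 'rV[R]_n) : Prop :=
  forall rho, P rho -> dot x rho = 0.

Definition in_LA (W : seq 'M[R]_n) (X : 'rV[R]_n -> Prop) : Prop :=
  exists P : 'rV[R]_n -> Prop, (forall rho, P rho -> is_root W rho) /\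
    (forall x, X x <-> flat P x).

(* Dimension of an affine subset of R^n (empty set has dimension -1):
   A is the translate a0 + U of a linear subspace U (row space of a matrix)
   of rank d. *)
Definition has_affdim (A : 'rV[R]_n -> Prop) (d : int) : Prop :=
  ((forall x, ~ A x) /\ d = -1) \/
  (exists (a0 : 'rV[R]_n) (U : 'M[R]_n),
      d = (\rank U)%:Z /\ forall x, A x <-> (x - a0 <= U)%MS).

Definition essential (W : seq 'M[R]_n) : Prop :=
  forall x : 'rV[R]_n, (forall rho, is_root W rho -> dot x rho = 0) -> x = 0.

Definition is_ray (W : seq 'M[R]_n) (r : 'rV[R]_n) : Prop :=
  r != 0 /\ exists X, [/\ in_LA W X, has_affdim X 1 & X r].

Definition is_unit_ray W r : Prop := is_ray W r /\ dot r r = 1.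

Definition is_lambda (W : seq 'M[R]_n) (lam : R) : Prop :=
  (exists r rho, [/\ is_unit_ray W r, is_root W rho, dot r rho != 0 &
                    `|dot r rho| = lam]) /\
  (forall r rho, is_unit_ray W r -> is_root W rho -> dot r rho != 0 ->
     lam <= `|dot r rho|).

Definition Hv (v x : 'rV[R]_n) : Prop := dot x v = dot v v.

Definition generic (W : seq 'M[R]_n) (v : 'rV[R]_n) : Prop :=
  forall X, in_LA W X -> forall d : int, has_affdim X d ->
    has_affdim (fun x => Hv v x /\ X x) (d - 1).

End Defs.

(* Main.v *)
Require Import Defs.
From HB Require Import structures.
From mathcomp Require Import all_boot all_order all_algebra.
From mathcomp Require Import reals ring lra zify.
From Stdlib Require Import Classical.
Import Order.TTheory GRing.Theory Num.Theory.
Local Open Scope ring_scope.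
Set Implicit Arguments. Unset Strict Implicit.

Section Aux.
Variables (R : realType) (n : nat).
Implicit Types (x y z u w : 'rV[R]_n).

Lemma dotC x y : dot x y = dot y x.
Proof. by rewrite /dot; apply: eq_bigr => i _; rewrite mulrC. Qed.

Lemma dotDl x y z : dot (x + y) z = dot x z + dot y z.
Proof. by rewrite /dot -big_split; apply: eq_bigr => i _; rewrite mxE mulrDl. Qed.

Lemma dotZl (c : R) x y : dot (c *: x) y = c * dot x y.
Proof. by rewrite /dot mulr_sumr; apply: eq_bigr => i _; rewrite mxE mulrA. Qed.

Lemma dotNl x y : dot (- x) y = - dot x y.
Proof. by rewrite /dot -sumrN; apply: eq_bigr => i _; rewrite mxE mulNr. Qed.

Lemma dotBl x y z : dot (x - y) z = dot x z - dot y z.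
Proof. by rewrite dotDl dotNl. Qed.

Lemma dot0l y : dot 0 y = 0.
Proof. by rewrite /dot big1 // => i _; rewrite mxE mul0r. Qed.

Lemma dotZr (c : R) x y : dot x (c *: y) = c * dot x y.
Proof. by rewrite dotC dotZl dotC. Qed.

Lemma dotDr x y z : dot x (y + z) = dot x y + dot x z.
Proof. by rewrite dotC dotDl !(dotC x). Qed.

Lemma dot0r y : dot y 0 = 0.
Proof. by rewrite dotC dot0l. Qed.

Lemma dot_sumr m x (F : 'I_m -> 'rV[R]_n) :
  dot x (\sum_(i < m) F i) = \sum_(i < m) dot x (F i).
Proof.
rewrite /dot; under eq_bigr => j _ do rewrite summxE mulr_sumr.
rewrite exchange_big; apply: eq_bigr => i _ //.
Qed.

Lemma dot_ge0 x : 0 <= dot x x.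
Proof. by apply: sumr_ge0 => i _; rewrite -expr2 sqr_ge0. Qed.

Lemma dot_eq0 x : dot x x = 0 -> x = 0.
Proof.
move=> h; have H := psumr_eq0P _ h.
apply/rowP => i; rewrite mxE.
have /eqP := H (fun j _ => ltac:(by rewrite -expr2 sqr_ge0)) i isT.
by rewrite mulf_eq0 orbb => /eqP.
Qed.

Lemma dot_mx x y : (x *m y^T) 0 0 = dot x y.
Proof. by rewrite mxE /dot; apply: eq_bigr => i _; rewrite mxE. Qed.


Lemma dot_unit_le1 x y : dot x x = 1 -> dot y y = 1 -> `|dot x y| <= 1.
Proof.
move=> hx hy.
have h1 := dot_ge0 (x - y); have h2 := dot_ge0 (x + y).
have eN : forall a b : 'rV[R]_n, dot a (- b) = - dot a b by move=> a b; rewrite dotC dotNl dotC.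
rewrite !dotDl !dotNl !dotDr !eN (dotC y x) hx hy in h1 h2.
rewrite ler_norml; apply/andP; split; lra.
Qed.

Lemma sub_ker x w : (x <= kermx w^T)%MS = (dot x w == 0).
Proof.
rewrite sub_kermx -dot_mx; apply/eqP/eqP => [->|h]; first by rewrite mxE.
by apply/matrixP => i j; rewrite !ord1 h mxE.
Qed.

Lemma cut_rank (U : 'M[R]_n) u w : (u <= U)%MS -> dot u w != 0 ->
  (0 < \rank U)%N /\ \rank (U :&: kermx w^T)%MS = (\rank U).-1.
Proof.
move=> uU uw.
have wnz : w != 0 by apply: contraNneq uw => ->; rewrite dot0r.
have unz : u != 0 by apply: contraNneq uw => ->; rewrite dot0l.
have rU : (0 < \rank U)%N.
  by have := mxrankS uU; rewrite rank_rV unz.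
split=> //.
have rK : \rank (kermx w^T) = (n - 1)%N by rewrite mxrank_ker mxrank_tr rank_rV wnz.
have lt : (kermx w^T < U + kermx w^T)%MS.
  rewrite ltmxE addsmxSr /=; apply/negP => h.
  have : (u <= kermx w^T)%MS by apply: submx_trans h; apply: submx_trans uU (addsmxSl _ _).
  by rewrite sub_ker (negPf uw).
have := rank_ltmx lt; rewrite rK => h1.
have h2 := rank_leq_col (U + kermx w^T)%MS.
have := mxrank_sum_cap U (kermx w^T); rewrite rK.
move: h1 h2 rU; set a := \rank (U + _)%MS; set b := \rank (U :&: _)%MS; set c := \rank U.
move=> h1 h2 h4 h3; rewrite -subn1; lia.
Qed.


Lemma geom (lam : R) (hl : lam != 0) m :
  \sum_(i < m) (1 + lam^-1) ^+ i = lam * ((1 + lam^-1) ^+ m - 1).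
Proof.
elim: m => [|m IH]; first by rewrite big_ord0 expr0 subrr mulr0.
rewrite big_ord_recr /= IH exprSr; move: ((1 + lam^-1) ^+ m) => t.
by field.
Qed.

Lemma seq_bound (lam : R) (f : nat -> R) (hl : 0 < lam)
  (h1 : forall i, `|f i| <= 1) (h2 : forall i, f i != 0 -> lam <= `|f i|) m :
  (forall i, (i < m)%N -> f i = 0) \/
  lam <= `|\sum_(i < m) (1 + lam^-1) ^+ i * f i|.
Proof.
have a0 : 0 <= 1 + lam^-1 by rewrite addr_ge0 // invr_ge0 ltW.
elim: m => [|m IH]; first by left.
rewrite big_ord_recr /=.
have [fm0|fmn0] := eqVneq (f m) 0.
  rewrite fm0 mulr0 addr0; case: IH => [h|h]; [left|by right].
  by move=> i; rewrite ltnS leq_eqVlt => /orP [/eqP ->|/h].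
right; set S := \sum_(i < m) _.
have hS : `|S| <= lam * ((1 + lam^-1) ^+ m - 1).
  rewrite -geom ?gt_eqF //; apply: le_trans (ler_norm_sum _ _ _) _.
  apply: ler_sum => i _; rewrite normrM ger0_norm ?exprn_ge0 //.
  by rewrite -{2}(mulr1 (_ ^+ _)) ler_wpM2l ?exprn_ge0.
have hT : (1 + lam^-1) ^+ m * lam <= `|(1 + lam^-1) ^+ m * f m|.
  by rewrite normrM ger0_norm ?exprn_ge0 // ler_wpM2l ?exprn_ge0 // h2.
have := lerB_normD ((1 + lam^-1) ^+ m * f m) S; rewrite addrC.
move: hS hT; move: ((1 + lam^-1) ^+ m) => t; lra.
Qed.

End Aux.

Section Main.
Variables (R : realType) (n : nat).

Lemma nonzero_row (U : 'M[R]_n) : U != 0 -> exists u : 'rV[R]_n, (u <= U)%MS /\ u != 0.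
Proof.
move=> hU; case: (pickP [pred i | row i U != 0]) => [i hi|h].
  by exists (row i U); split; [exact: row_sub|exact hi].
move/eqP: hU; case; apply/row_matrixP => i; rewrite row0.
by have := h i => /= /negbFE/eqP.
Qed.

Lemma ray_exists (W : seq 'M[R]_n) (hess : essential W) k :
  forall (P : 'rV[R]_n -> Prop) (U : 'M[R]_n),
  (forall rho, P rho -> is_root W rho) -> (forall x, flat P x <-> (x <= U)%MS) ->
  \rank U = k.+1 -> exists r, is_unit_ray W r /\ (r <= U)%MS.
Proof.
elim: k => [|k IH] P U hP hU rk.
- have Unz : U != 0 by rewrite -mxrank_eq0 rk.
  have [u [uU unz]] := nonzero_row Unz.
  have duu : dot u u != 0 by apply: (contra_neq (@dot_eq0 _ _ u)) unz.
  have dpos : 0 < dot u u by rewrite lt_def duu dot_ge0.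
  set s := Num.sqrt (dot u u).
  have s0 : 0 < s by rewrite sqrtr_gt0.
  have hr : dot (s^-1 *: u) (s^-1 *: u) = 1.
    rewrite dotZl dotZr -(sqr_sqrtr (dot_ge0 u)) -/s.
    by field; rewrite gt_eqF.
  exists (s^-1 *: u); split; last exact: scalemx_sub.
  split => //; split.
    by apply/eqP => h; move: hr; rewrite h dot0l => /eqP; rewrite eq_sym oner_eq0.
  exists (flat P); split.
  + by exists P; split.
  + by right; exists 0, U; split; [rewrite rk | move=> x; rewrite subr0; exact: hU].
  + by apply/hU; exact: scalemx_sub.
- have Unz : U != 0 by rewrite -mxrank_eq0 rk.
  have [u [uU unz]] := nonzero_row Unz.
  have [rho [hr hur]] : exists rho, is_root W rho /\ dot u rho != 0.
    case: (classic (exists rho, is_root W rho /\ dot u rho != 0)) => // hn.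
    exfalso; move/negP: unz; apply; apply/eqP; apply: hess => rho hrho.
    by apply: NNPP => h2; apply: hn; exists rho; split=> //; exact/eqP.
  have [_ rk'] := cut_rank uU hur.
  have h1 : forall s, P s \/ s = rho -> is_root W s by move=> s [/hP|->].
  have h2 : forall x, flat (fun s => P s \/ s = rho) x <-> (x <= U :&: kermx rho^T)%MS.
    move=> x; rewrite sub_capmx; split.
      move=> hf; apply/andP; split.
        by apply/hU => s hs; apply: hf; left.
      by rewrite sub_ker; apply/eqP; apply: hf; right.
    by case/andP => /hU hf; rewrite sub_ker => /eqP h0 s [/hf|->].
  have h3 : \rank (U :&: kermx rho^T)%MS = k.+1 by rewrite rk' rk.
  have [r [hr' rU']] := IH _ _ h1 h2 h3.
  by exists r; split => //; exact: submx_trans rU' (capmxSl _ _).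
Qed.

End Main.

Theorem proposition4p1 (R : realType) (n : nat) (W : seq 'M[R]_n)
  (hW : finite_reflection_group W) (hess : essential W)
  (tau : 'I_n -> 'rV[R]_n) (htau : forall i, is_root W (tau i))
  (hind : row_free (\matrix_(i < n) tau i))
  (lam : R) (hlam : is_lambda W lam) :
  let a := 1 + lam^-1 in
  let v := \sum_(i < n) a ^+ i *: tau i in
  (forall r, is_unit_ray W r -> lam <= `|dot r v|) /\ generic W v.
Proof.
move=> a v.
have [[r0 [rho0 [ur0 hrho0 nz0 eq0]]] hmin] := hlam.
have lam0 : 0 < lam by rewrite -eq0 normr_gt0.
have part1 : forall r, is_unit_ray W r -> lam <= `|dot r v|.
  move=> r hr; have [[rnz _] rr] := hr.
  pose f i := oapp (fun j : 'I_n => dot r (tau j)) 0 (insub i).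
  have := @seq_bound R lam f lam0 _ _ n.
  case.
  - move=> i; rewrite /f; case: insubP => [j _ _|_] /=.
      exact: dot_unit_le1 rr (htau j).1.
    by rewrite normr0 ler01.
  - move=> i; rewrite /f; case: insubP => [j _ _|_] /= h.
      exact: hmin.
    by rewrite eqxx in h.
  - move=> hz; exfalso.
    have hz' : forall j : 'I_n, dot r (tau j) = 0.
      by move=> j; have := hz j (ltn_ord j); rewrite /f valK.
    set M := \matrix_(i < n) tau i.
    have Mu : M^T \in unitmx by rewrite unitmx_tr -row_free_unit.
    have h : r *m M^T = 0.
      apply/rowP => j; rewrite [RHS]mxE; transitivity (dot r (tau j)); last exact: hz'.
      by rewrite mxE /dot; apply: eq_bigr => k _; rewrite !mxE.
    by move/eqP: rnz; apply; rewrite -(mulmxK Mu r) h mul0mx.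
  - have -> : dot r v = \sum_(i < n) a ^+ i * f i.
      by rewrite /v dot_sumr; apply: eq_bigr => i _; rewrite dotZr /f valK.
    by [].
split => //.
move=> X [P [hP hX]] d [[hemp _]|[a0 [U [hd hXU]]]].
- by exfalso; apply: (hemp 0); apply/hX => rho _; exact: dot0l.
- have X0 : X 0 by apply/hX => rho _; exact: dot0l.
  have na0U : (- a0 <= U)%MS by move/(hXU 0): X0; rewrite sub0r.
  have a0U : (a0 <= U)%MS by move: na0U; rewrite eqmx_opp.
  have hXU' : forall x, X x <-> (x <= U)%MS.
    move=> x; rewrite hXU; split => h.
      by rewrite -(subrK a0 x); exact: addmx_sub.
    exact: addmx_sub h na0U.
  have hflat : forall x, flat P x <-> (x <= U)%MS.
    by move=> x; rewrite -hXU' hX.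
  have vnz : dot v v != 0.
    have h := part1 r0 ur0.
    by apply/eqP => /dot_eq0 hv; move: h; rewrite hv dot0r normr0 leNgt lam0.
  case rk: (\rank U) => [|k].
  + left; split; last by rewrite hd rk.
    move=> x [hx /hXU']; have /eqP U0 : U == 0 by rewrite -mxrank_eq0 rk.
    rewrite U0 submx0 => /eqP xe; move: hx; rewrite /Hv xe dot0l.
    by move=> /esym /eqP; rewrite (negPf vnz).
  + have [r [hr rU]] := ray_exists hess hP hflat rk.
    have rv : dot r v != 0.
      by have := part1 r hr; apply: contraTneq => ->; rewrite normr0 -ltNge lam0.
    have [_ rk'] := cut_rank rU rv.
    right; exists ((dot v v / dot r v) *: r), (U :&: kermx v^T)%MS; split.
      by rewrite rk' hd rk /= -addn1 PoszD addrK.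
    move=> x; rewrite sub_capmx sub_ker dotBl dotZl divfK // subr_eq0 /Hv; split.
      case=> hx /hXU' hxU; rewrite hx eqxx andbT.
      by apply: addmx_sub hxU _; rewrite eqmx_opp; exact: scalemx_sub.
    case/andP => h1 /eqP h2; split => //; apply/hXU'.
    by rewrite -(subrK ((dot v v / dot r v) *: r) x); exact: addmx_sub h1 (scalemx_sub _ rU).
Qed.
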